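(* In the E-phase model, for every formula $A$: (1) for every formula $D$ and every $n\ge 0$ and $T_1,\dots,T_n$ each a closed term or an atom, if $c^D T_1\cdots T_n\in[\![A]\!]$ then $c^D T_1\cdots T_n\in A^*$; and (2) $A^*\subseteq[\![A]\!]$.
   Context: System $\mathbf{IL}_{\mathbf{at}}$: formulas $A ::= X\mid A\to B\mid\forall X.A$ ($X$ atoms); terms $t ::= x\mid c^A\mid\lambda x.t\mid ts\mid\Lambda X.t\mid tX$ (a term-constant $c^A$ for each formula $A$; $tX$ only with $X$ an atom). $\Gamma\vdash t:A$ derivable by: $\Gamma,x:A\vdash x:A$; $\Gamma\vdash c^A:A$; $\to$-introduction and elimination (abstraction, application); $\forall$-introduction $\Gamma\vdash\Lambda X.t:\forall X.A$ from $\Gamma\vdash t:A$ if $X$ is not free in the formulas of $\Gamma$; $\forall$-elimination $\Gamma\vdash tY:A[X:=Y]$ from $\Gamma\vdash t:\forall X.A$ for atoms $Y$. $\beta$-reduction $(\lambda x.t)s\to_\beta t[x:=s]$, $(\Lambda X.t)Y\to_\beta t[X:=Y]$ in any subterm position; normal = no redex; $\twoheadrightarrow$ reflexive-transitive closure. Closed term = no free term-variables. $[\![A]\!]$ = set of closed terms $t$ with $t\twoheadrightarrow s$ for some normal $s$ such that $\vdash s:A$ is derivable. E-phase model: interpretation of formulas as sets of closed terms: $X^*=[\![X]\!]$; $(A\to B)^*=\{t\text{ closed}\mid ts\in B^*\text{ for every }s\in A^*\}$; $(\forall X.A)^*=\{t\text{ closed}\mid tY\in(A[X:=Y])^*\text{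 for every atom }Y\}$. *)

(* Defs.v *)
(* System IL_at with de Bruijn indices for both atom binders
   (forall X.A, Lambda X.t) and term-variable binders (lambda x.t).
   Free atoms are the de Bruijn indices that are not bound; at top level
   every natural number n denotes an atom. *)
From Stdlib Require Import Arith List.
Import ListNotations.

Inductive form : Type :=
| Atom : nat -> form
| Imp  : form -> form -> form
| All  : form -> form.          (* forall X. A ; X is index 0 in the body *)

Definition ashift (c n : nat) : nat := if Nat.ltb n c then n else S n.

(* substituting the atom Y (given at the level outside the binder) for the
   bound index c, decrementing the indices above c *)
Definition asubst (c Y n : nat) : nat :=
  if Nat.eqb n c then Y + c else if Nat.ltb n c then n else pred n.

Fixpoint fshift (c : nat) (A : form) : form :=
  match A with
  | Atom n => Atom (ashift c n)
  | Imp A B => Imp (fshift c A) (fshift c B)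
  | All A => All (fshift (S c) A)
  end.

Fixpoint fsubst (c Y : nat) (A : form) : form :=
  match A with
  | Atom n => Atom (asubst c Y n)
  | Imp A B => Imp (fsubst c Y A) (fsubst c Y B)
  | All A => All (fsubst (S c) Y A)
  end.

(* A[X:=Y] where forall X. A is represented as All A *)
Definition finst (A : form) (Y : nat) : form := fsubst 0 Y A.

Fixpoint fsize (A : form) : nat :=
  match A with
  | Atom _ => 1
  | Imp A B => S (fsize A + fsize B)
  | All A => S (fsize A)
  end.

Inductive term : Type :=
| Var   : nat -> term
| Const : form -> term
| Lam   : term -> term           (* lambda x. t  (Curry style) *)
| App   : term -> term -> term
| TLam  : term -> term
| TApp  : term -> nat -> term.

Fixpoint vshift (c : nat) (t : term) : term :=
  match t with
  | Var i => Var (if Nat.ltb i c then i else S i)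
  | Const A => Const A
  | Lam t => Lam (vshift (S c) t)
  | App t s => App (vshift c t) (vshift c s)
  | TLam t => TLam (vshift c t)
  | TApp t Y => TApp (vshift c t) Y
  end.

Fixpoint tshift (c : nat) (t : term) : term :=
  match t with
  | Var i => Var i
  | Const A => Const (fshift c A)
  | Lam t => Lam (tshift c t)
  | App t s => App (tshift c t) (tshift c s)
  | TLam t => TLam (tshift (S c) t)
  | TApp t Y => TApp (tshift c t) (ashift c Y)
  end.

Fixpoint vsubst (c : nat) (s : term) (t : term) : term :=
  match t with
  | Var i => if Nat.eqb i c then s else if Nat.ltb i c then Var i else Var (pred i)
  | Const A => Const A
  | Lam t => Lam (vsubst (S c) (vshift 0 s) t)
  | App t1 t2 => App (vsubst c s t1) (vsubst c s t2)
  | TLam t => TLam (vsubst c (tshift 0 s) t)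
  | TApp t Y => TApp (vsubst c s t) Y
  end.

Fixpoint tsubst (c Y : nat) (t : term) : term :=
  match t with
  | Var i => Var i
  | Const A => Const (fsubst c Y A)
  | Lam t => Lam (tsubst c Y t)
  | App t1 t2 => App (tsubst c Y t1) (tsubst c Y t2)
  | TLam t => TLam (tsubst (S c) Y t)
  | TApp t Z => TApp (tsubst c Y t) (asubst c Y Z)
  end.

Inductive typed : list form -> term -> form -> Prop :=
| ty_var : forall G i A, nth_error G i = Some A -> typed G (Var i) A
| ty_const : forall G A, typed G (Const A) A
| ty_lam : forall G t A B, typed (A :: G) t B -> typed G (Lam t) (Imp A B)
| ty_app : forall G t s A B,
    typed G t (Imp A B) -> typed G s A -> typed G (App t s) B
| ty_tlam : forall G t A,
    (* the new atom (index 0) is not free in the shifted context *)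
    typed (map (fshift 0) G) t A -> typed G (TLam t) (All A)
| ty_tapp : forall G t A Y, typed G t (All A) -> typed G (TApp t Y) (finst A Y).

Inductive step : term -> term -> Prop :=
| st_beta : forall t s, step (App (Lam t) s) (vsubst 0 s t)
| st_tbeta : forall t Y, step (TApp (TLam t) Y) (tsubst 0 Y t)
| st_lam : forall t t', step t t' -> step (Lam t) (Lam t')
| st_appl : forall t t' s, step t t' -> step (App t s) (App t' s)
| st_appr : forall t s s', step s s' -> step (App t s) (App t s')
| st_tlam : forall t t', step t t' -> step (TLam t) (TLam t')
| st_tapp : forall t t' Y, step t t' -> step (TApp t Y) (TApp t' Y).

Inductive steps : term -> term -> Prop :=
| steps_refl : forall t, steps t t
| steps_step : forall t u v, step t u -> steps u v -> steps t v.

Fixpoint normal (t : term) : Prop :=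
  match t with
  | Var _ | Const _ => True
  | Lam t => normal t
  | App t s =>
      match t with Lam _ => False | _ => normal t /\ normal s end
  | TLam t => normal t
  | TApp t _ =>
      match t with TLam _ => False | _ => normal t end
  end.

(* no free term variables (atoms may occur free) *)
Fixpoint closed_at (k : nat) (t : term) : Prop :=
  match t with
  | Var i => i < k
  | Const _ => True
  | Lam t => closed_at (S k) t
  | App t s => closed_at k t /\ closed_at k s
  | TLam t => closed_at k t
  | TApp t _ => closed_at k t
  end.
Definition closed (t : term) : Prop := closed_at 0 t.

Definition sem (A : form) (t : term) : Prop :=
  closed t /\ exists s, steps t s /\ normal s /\ typed nil s A.

(* E-phase model A^*, by recursion on a fuel bounded by the size of A
   (A[X:=Y] has the same size as A) *)
Fixpoint star_n (n : nat) (A : form) (t : term) : Prop :=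
  match n with
  | 0 => False
  | S n =>
      match A with
      | Atom X => sem (Atom X) t
      | Imp A B => closed t /\ (forall s, star_n n A s -> star_n n B (App t s))
      | All A => closed t /\ (forall Y : nat, star_n n (finst A Y) (TApp t Y))
      end
  end.
Definition star (A : form) (t : term) : Prop := star_n (fsize A) A t.

(* c^D T_1 ... T_n, each T_i a term (inl) or an atom (inr) *)
Definition apps (h : term) (Ts : list (term + nat)) : term :=
  fold_left (fun h T => match T with inl s => App h s | inr Y => TApp h Y end) Ts h.

Definition arg_ok (T : term + nat) : Prop :=
  match T with inl s => closed s | inr _ => True end.

(* Main.v *)
Require Import Defs.
From Stdlib Require Import List Arith Lia.
Import ListNotations.

Ltac arith :=
  repeat (simpl in *; first
    [ match goal with |- context [Nat.eqb ?a ?b] => destruct (Nat.eqb_spec a b) end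
    | match goal with |- context [Nat.ltb ?a ?b] => destruct (Nat.ltb_spec a b) end
    | match goal with H : context [Nat.eqb ?a ?b] |- _ => destruct (Nat.eqb_spec a b) end
    | match goal with H : context [Nat.ltb ?a ?b] |- _ => destruct (Nat.ltb_spec a b) end ]);
  simpl in *; try (f_equal; lia); try lia; try congruence.

Definition rlift (f : nat -> nat) (n : nat) : nat :=
  match n with 0 => 0 | S m => S (f m) end.

Fixpoint frn (f : nat -> nat) (A : form) : form :=
  match A with
  | Atom n => Atom (f n)
  | Imp A B => Imp (frn f A) (frn f B)
  | All A => All (frn (rlift f) A)
  end.

Fixpoint trn (f : nat -> nat) (t : term) : term :=
  match t with
  | Var i => Var i
  | Const A => Const (frn f A)
  | Lam t => Lam (trn f t)
  | App t s => App (trn f t) (trn f s)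
  | TLam t => TLam (trn (rlift f) t)
  | TApp t Y => TApp (trn f t) (f Y)
  end.

Fixpoint liftn (c : nat) (f : nat -> nat) : nat -> nat :=
  match c with 0 => f | S c => rlift (liftn c f) end.

Lemma frn_ext : forall A r q, (forall n, r n = q n) -> frn r A = frn q A.
Proof.
  induction A; intros r q H; simpl; f_equal; auto.
  apply IHA; intros [|n]; simpl; auto.
Qed.

Lemma trn_ext : forall t r q, (forall n, r n = q n) -> trn r t = trn q t.
Proof.
  induction t; intros r q H; simpl; f_equal; auto using frn_ext.
  apply IHt; intros [|n]; simpl; auto.
Qed.

Lemma frn_comp : forall A r q, frn r (frn q A) = frn (fun n => r (q n)) A.
Proof.
  induction A; intros r q; simpl; f_equal; auto.
  rewrite IHA; apply frn_ext; intros [|n]; reflexivity.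
Qed.

Lemma trn_comp : forall t r q, trn r (trn q t) = trn (fun n => r (q n)) t.
Proof.
  induction t; intros r q; simpl; f_equal; auto using frn_comp.
  rewrite IHt; apply trn_ext; intros [|n]; reflexivity.
Qed.

Lemma frn_id : forall A, frn (fun n => n) A = A.
Proof.
  induction A; simpl; f_equal; auto.
  rewrite <- IHA at 2; apply frn_ext; intros [|n]; reflexivity.
Qed.

Lemma trn_id : forall t, trn (fun n => n) t = t.
Proof.
  induction t; simpl; f_equal; auto using frn_id.
  rewrite <- IHt at 2; apply trn_ext; intros [|n]; reflexivity.
Qed.

Lemma ashift_liftn : forall c n, ashift c n = liftn c S n.
Proof.
  induction c; intros n; unfold ashift in *; simpl.
  - destruct n; reflexivity.
  - destruct n; [reflexivity|]. simpl. rewrite <- IHc. arith.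
Qed.

Lemma asubst_liftn : forall c Y n, asubst c Y n = liftn c (asubst 0 Y) n.
Proof.
  induction c; intros Y n; [reflexivity|].
  simpl. destruct n; [reflexivity|]. simpl. rewrite <- IHc. unfold asubst.
  arith.
Qed.

Lemma fshift_rn : forall A c, fshift c A = frn (liftn c S) A.
Proof.
  induction A; intros c; simpl; f_equal; auto using ashift_liftn.

Qed.

Lemma fsubst_rn : forall A c Y, fsubst c Y A = frn (liftn c (asubst 0 Y)) A.
Proof.
  induction A; intros c Y; simpl; f_equal; auto using asubst_liftn.

Qed.

Lemma tshift_rn : forall t c, tshift c t = trn (liftn c S) t.
Proof.
  induction t; intros c; simpl; f_equal; auto using ashift_liftn, fshift_rn.

Qed.

Lemma tsubst_rn : forall t c Y, tsubst c Y t = trn (liftn c (asubst 0 Y)) t.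
Proof.
  induction t; intros c Y; simpl; f_equal; auto using asubst_liftn, fsubst_rn.

Qed.

Lemma fshift0_rn : forall A, fshift 0 A = frn S A.
Proof. intros; apply fshift_rn. Qed.
Lemma tshift0_rn : forall t, tshift 0 t = trn S t.
Proof. intros; apply tshift_rn. Qed.
Lemma finst_rn : forall A Y, finst A Y = frn (asubst 0 Y) A.
Proof. intros; apply fsubst_rn. Qed.
Lemma tsubst0_rn : forall t Y, tsubst 0 Y t = trn (asubst 0 Y) t.
Proof. intros; apply tsubst_rn. Qed.

Lemma fsize_frn : forall A r, fsize (frn r A) = fsize A.
Proof. induction A; intros; simpl; auto. Qed.

Lemma fsize_finst : forall A Y, fsize (finst A Y) = fsize A.
Proof. intros; rewrite finst_rn; apply fsize_frn. Qed.

Lemma frn_fshift0 : forall A r, frn (rlift r) (fshift 0 A) = fshift 0 (frn r A).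
Proof.
  intros; rewrite !fshift0_rn, !frn_comp; apply frn_ext; reflexivity.
Qed.

Lemma trn_tshift0 : forall t r, trn (rlift r) (tshift 0 t) = tshift 0 (trn r t).
Proof.
  intros; rewrite !tshift0_rn, !trn_comp; apply trn_ext; reflexivity.
Qed.

Lemma asubst0_rlift : forall r Y n, r (asubst 0 Y n) = asubst 0 (r Y) (rlift r n).
Proof.
  intros r Y [|n]; unfold asubst; simpl; rewrite ?Nat.add_0_r; reflexivity.
Qed.

Lemma frn_finst : forall A r Y, frn r (finst A Y) = finst (frn (rlift r) A) (r Y).
Proof.
  intros; rewrite !finst_rn, !frn_comp; apply frn_ext; apply asubst0_rlift.
Qed.

Lemma trn_tsubst0 : forall t r Y, trn r (tsubst 0 Y t) = tsubst 0 (r Y) (trn (rlift r) t).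
Proof.
  intros; rewrite !tsubst0_rn, !trn_comp; apply trn_ext; apply asubst0_rlift.
Qed.

Lemma trn_vshift : forall t r c, trn r (vshift c t) = vshift c (trn r t).
Proof. induction t; intros; simpl; f_equal; auto. Qed.

Lemma trn_vsubst : forall t r k s, trn r (vsubst k s t) = vsubst k (trn r s) (trn r t).
Proof.
  induction t; intros r k s; simpl; f_equal; auto.
  - destruct (Nat.eqb n k); auto. destruct (Nat.ltb n k); auto.
  - rewrite IHt, trn_vshift; reflexivity.
  - rewrite IHt, trn_tshift0; reflexivity.
Qed.

Lemma step_rn : forall t u, step t u -> forall r, step (trn r t) (trn r u).
Proof.
  induction 1; intros r; simpl; try (constructor; auto; fail).
  - rewrite trn_vsubst; constructor.
  - rewrite trn_tsubst0; constructor.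
Qed.

Lemma steps_rn : forall t u, steps t u -> forall r, steps (trn r t) (trn r u).
Proof.
  induction 1; intros r; [constructor|]. econstructor; [apply step_rn; eauto|auto].
Qed.

Lemma normal_rn : forall t r, normal t -> normal (trn r t).
Proof.
  induction t; intros r H; simpl in *; auto.
  - destruct t1; simpl in *; try contradiction; destruct H; split; auto;
      apply (IHt1 r); simpl; auto.
  - destruct t; simpl in *; try contradiction; apply (IHt r); simpl; auto.
Qed.

Lemma typed_rn : forall G t A, typed G t A -> forall r,
  typed (map (frn r) G) (trn r t) (frn r A).
Proof.
  induction 1; intros r; simpl.
  - constructor. rewrite nth_error_map, H; reflexivity.
  - constructor.
  - constructor; apply IHtyped.
  - econstructor; [apply IHtyped1|apply IHtyped2].
  - constructor. specialize (IHtyped (rlift r)).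
    rewrite map_map in *. erewrite map_ext; [exact IHtyped|].
    intros; symmetry; apply frn_fshift0.
  - rewrite frn_finst. constructor. apply IHtyped.
Qed.

Fixpoint fbound (N : nat) (A : form) : Prop :=
  match A with
  | Atom n => n < N
  | Imp A B => fbound N A /\ fbound N B
  | All A => fbound (S N) A
  end.

Fixpoint tbound (N : nat) (t : term) : Prop :=
  match t with
  | Var _ => True
  | Const A => fbound N A
  | Lam t => tbound N t
  | App t s => tbound N t /\ tbound N s
  | TLam t => tbound (S N) t
  | TApp t Y => tbound N t /\ Y < N
  end.

Lemma frn_agree : forall A N r q, (forall n, n < N -> r n = q n) -> fbound N A ->
  frn r A = frn q A.
Proof.
  induction A; intros N r q H HB; simpl in *; f_equal; intuition eauto.
  apply (IHA (S N)); auto. intros [|n] Hn; simpl; auto. f_equal; apply H; lia.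
Qed.

Lemma trn_agree : forall t N r q, (forall n, n < N -> r n = q n) -> tbound N t ->
  trn r t = trn q t.
Proof.
  induction t; intros N r q H HB; simpl in *; f_equal; intuition eauto using frn_agree.
  apply (IHt (S N)); auto. intros [|n] Hn; simpl; auto. f_equal; apply H; lia.
Qed.

Lemma fbound_rn : forall A N M r, (forall n, n < N -> r n < M) -> fbound N A ->
  fbound M (frn r A).
Proof.
  induction A; intros N M r H HB; simpl in *; intuition eauto.
  apply (IHA (S N)); auto. intros [|n] Hn; simpl; [lia|]. specialize (H n); lia.
Qed.

Lemma tbound_rn : forall t N M r, (forall n, n < N -> r n < M) -> tbound N t ->
  tbound M (trn r t).
Proof.
  induction t; intros N M r H HB; simpl in *; intuition eauto using fbound_rn.
  apply (IHt (S N)); auto. intros [|n] Hn; simpl; [lia|]. specialize (H n); lia.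
Qed.

Lemma fbound_mono : forall A N M, fbound N A -> N <= M -> fbound M A.
Proof. induction A; intros N M H HNM; simpl in *; intuition eauto; try lia.
  apply (IHA (S N)); auto; lia. Qed.

Lemma tbound_mono : forall t N M, tbound N t -> N <= M -> tbound M t.
Proof. induction t; intros N M H HNM; simpl in *; intuition eauto using fbound_mono; try lia.
  apply (IHt (S N)); auto; lia. Qed.

Lemma fbound_ex : forall A, exists N, fbound N A.
Proof.
  induction A as [n|A1 [N1 H1] A2 [N2 H2]|A [N H]].
  - exists (S n); simpl; lia.
  - exists (max N1 N2); simpl; split; eapply fbound_mono; eauto; lia.
  - exists N; simpl; eapply fbound_mono; eauto.
Qed.

Lemma tbound_ex : forall t, exists N, tbound N t.
Proof.
  induction t as [i|A|t [N H]|t1 [N1 H1] t2 [N2 H2]|t [N H]|t [N H] Y].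
  - exists 0; simpl; auto.
  - destruct (fbound_ex A) as [N H]; exists N; auto.
  - exists N; auto.
  - exists (max N1 N2); simpl; split; eapply tbound_mono; eauto; lia.
  - exists N; simpl; eapply tbound_mono; eauto.
  - exists (max N (S Y)); simpl; split; [eapply tbound_mono; eauto|]; lia.
Qed.

Lemma tbound_vshift : forall t N c, tbound N t -> tbound N (vshift c t).
Proof. induction t; intros; simpl in *; intuition auto. Qed.

Lemma tbound_vsubst : forall t N k s, tbound N s -> tbound N t -> tbound N (vsubst k s t).
Proof.
  induction t; intros N k s Hs Ht; simpl in *; intuition auto using tbound_vshift.
  - destruct (Nat.eqb n k); auto. destruct (Nat.ltb n k); simpl; auto.
  - apply IHt; auto. rewrite tshift0_rn. eapply tbound_rn; eauto. intros; lia.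
Qed.

Lemma step_bound : forall t u, step t u -> forall N, tbound N t -> tbound N u.
Proof.
  induction 1; intros N HB; simpl in *; intuition auto using tbound_vsubst.
  rewrite tsubst0_rn. eapply tbound_rn; eauto.
  intros [|n] Hn; unfold asubst; simpl; lia.
Qed.

Lemma steps_bound : forall t u, steps t u -> forall N, tbound N t -> tbound N u.
Proof. induction 1; eauto using step_bound. Qed.

Fixpoint neutral (t : term) : Prop :=
  match t with
  | Var _ | Const _ => True
  | App t _ => neutral t
  | TApp t _ => neutral t
  | _ => False
  end.

Lemma normal_neutral : forall t G B, normal t -> typed G t B ->
  match t with Lam _ | TLam _ => False | _ => True end -> neutral t.
Proof.
  induction t; intros G B Hn Ht Hs; simpl in *; auto.
  - inversion Ht; subst. destruct t1; try contradiction; simpl in Hn;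
      try (eapply IHt1; [tauto|eassumption|exact I]).
    inversion H2.
  - inversion Ht; subst. destruct t; try contradiction; simpl in Hn;
      try (eapply IHt; [eassumption|eassumption|exact I]).
    inversion H3.
Qed.

Lemma neutral_bound : forall t B N, neutral t -> typed [] t B -> tbound N t -> fbound N B.
Proof.
  induction t; intros B N Hn Ht HB; simpl in *; try contradiction.
  - inversion Ht; subst. match goal with H : nth_error [] _ = _ |- _ => destruct n; discriminate H end.
  - inversion Ht; subst; auto.
  - inversion Ht; subst. apply (IHt1 (Imp A B)); tauto.
  - inversion Ht; subst. destruct HB as [HB HY].
    specialize (IHt (All A) N Hn H3 HB). simpl in IHt.
    rewrite finst_rn. eapply fbound_rn; eauto.
    intros [|m] Hm; unfold asubst; simpl; lia.
Qed.

Definition rho (N : nat) (n : nat) : nat := if Nat.eqb n N then 0 else S n.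

Lemma rho_asubst : forall N n, n < S N -> rho N (asubst 0 N n) = n.
Proof.
  intros N [|m] H; unfold rho, asubst; simpl.
  - rewrite Nat.add_0_r, Nat.eqb_refl; reflexivity.
  - destruct (Nat.eqb_spec m N); [lia|reflexivity].
Qed.

Lemma frn_rho_finst : forall A N, fbound (S N) A -> frn (rho N) (finst A N) = A.
Proof.
  intros. rewrite finst_rn, frn_comp.
  rewrite <- (frn_id A) at 2. eapply frn_agree; eauto. apply rho_asubst.
Qed.

Lemma trn_rho_tsubst : forall t N, tbound (S N) t -> trn (rho N) (tsubst 0 N t) = t.
Proof.
  intros. rewrite tsubst0_rn, trn_comp.
  rewrite <- (trn_id t) at 2. eapply trn_agree; eauto. apply rho_asubst.
Qed.

Lemma finst_inj : forall A A' N, fbound (S N) A -> fbound (S N) A' ->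
  finst A N = finst A' N -> A = A'.
Proof.
  intros A A' N H1 H2 E.
  rewrite <- (frn_rho_finst A N H1), <- (frn_rho_finst A' N H2), E; reflexivity.
Qed.

Lemma vshift_vsubst_const : forall Q j k E, j <= k ->
  vsubst (S k) (Const E) (vshift j Q) = vshift j (vsubst k (Const E) Q).
Proof.
  induction Q; intros j k E Hjk; simpl.
  - arith.
  - reflexivity.
  - f_equal. apply IHQ; lia.
  - f_equal; auto.
  - f_equal. apply IHQ; lia.
  - f_equal; auto.
Qed.

Lemma vsubst_comm_const : forall P j k Q E, j <= k ->
  vsubst k (Const E) (vsubst j Q P) =
  vsubst j (vsubst k (Const E) Q) (vsubst (S k) (Const E) P).
Proof.
  induction P; intros j k Q E Hjk; simpl.
  - arith.
  - reflexivity.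
  - f_equal. rewrite IHP by lia. f_equal. apply vshift_vsubst_const; lia.
  - f_equal; auto.
  - f_equal. rewrite IHP by lia. f_equal.
    rewrite !tshift0_rn, trn_vsubst. simpl. rewrite fshift0_rn. reflexivity.
  - f_equal; auto.
Qed.

Lemma tsubst_vsubst_const : forall P k Y E,
  tsubst 0 Y (vsubst k (Const (fshift 0 E)) P) = vsubst k (Const E) (tsubst 0 Y P).
Proof.
  intros. rewrite !tsubst0_rn, trn_vsubst. f_equal. simpl. f_equal.
  rewrite fshift0_rn, frn_comp. rewrite <- (frn_id E) at 2. apply frn_ext.
  intros n; unfold asubst; simpl; reflexivity.
Qed.

Lemma vsubst_const_lam : forall M k E P, vsubst k (Const E) M = Lam P ->
  exists M0, M = Lam M0 /\ P = vsubst (S k) (Const E) M0.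
Proof.
  intros [i| | | | |] k E P H; simpl in H; try discriminate.
  - revert H; arith.
  - injection H; intros; subst; eauto.
Qed.

Lemma vsubst_const_tlam : forall M k E P, vsubst k (Const E) M = TLam P ->
  exists M0, M = TLam M0 /\ P = vsubst k (Const (fshift 0 E)) M0.
Proof.
  intros [i| | | | |] k E P H; simpl in H; try discriminate.
  - revert H; arith.
  - injection H; intros; subst; eauto.
Qed.

Lemma anti_step : forall M k E u, step (vsubst k (Const E) M) u ->
  exists M', step M M' /\ u = vsubst k (Const E) M'.
Proof.
  induction M; intros k E u H; simpl in H.
  - revert H; arith; intros Hs; inversion Hs.
  - inversion H.
  - inversion H; subst. destruct (IHM _ _ _ H1) as [M' [HM ->]].
    exists (Lam M'); split; [constructor; auto|reflexivity].
  - inversion H; subst.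
    + destruct (vsubst_const_lam _ _ _ _ (eq_sym H1)) as [M0 [-> ->]].
      exists (vsubst 0 M2 M0); split; [constructor|].
      rewrite vsubst_comm_const by lia. reflexivity.
    + destruct (IHM1 _ _ _ H3) as [M' [HM ->]].
      exists (App M' M2); split; [constructor; auto|reflexivity].
    + destruct (IHM2 _ _ _ H3) as [M' [HM ->]].
      exists (App M1 M'); split; [constructor; auto|reflexivity].
  - inversion H; subst. destruct (IHM _ _ _ H1) as [M' [HM ->]].
    exists (TLam M'); split; [constructor; auto|reflexivity].
  - inversion H; subst.
    + destruct (vsubst_const_tlam _ _ _ _ (eq_sym H1)) as [M0 [-> ->]].
      exists (tsubst 0 n M0); split; [constructor|].
      apply tsubst_vsubst_const.
    + destruct (IHM _ _ _ H3) as [M' [HM ->]].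
      exists (TApp M' n); split; [constructor; auto|reflexivity].
Qed.

Lemma anti_steps : forall k E s0 s, steps s0 s -> forall M, s0 = vsubst k (Const E) M ->
  exists M', steps M M' /\ s = vsubst k (Const E) M'.
Proof.
  intros k E s0 s H; induction H; intros M ->.
  - exists M; split; [constructor|reflexivity].
  - destruct (anti_step _ _ _ _ H) as [M1 [H1 ->]].
    destruct (IHsteps M1 eq_refl) as [M2 [H2 ->]].
    exists M2; split; [econstructor; eauto|reflexivity].
Qed.

Lemma normal_vsubst_inv : forall M k E, normal (vsubst k (Const E) M) -> normal M.
Proof.
  induction M; intros k E H; simpl in *; eauto.
  - destruct M1; simpl in *.
    + split; [exact I|]. apply (IHM2 k E). revert H.
      destruct (n =? k); [|destruct (n <? k)]; simpl; tauto.
    + split; [exact I|]. apply (IHM2 k E); tauto.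
    + contradiction.
    + split; [apply (IHM1 k E)|apply (IHM2 k E)]; simpl; tauto.
    + split; [apply (IHM1 k E)|apply (IHM2 k E)]; simpl; tauto.
    + split; [apply (IHM1 k E)|apply (IHM2 k E)]; simpl; tauto.
  - destruct M; simpl in *; auto; try contradiction.
    + apply (IHM k E); exact H.
    + apply (IHM k E); exact H.
    + apply (IHM k E); exact H.
Qed.

Lemma typed_vsubst_inv : forall N G1 G2 E B,
  typed (G1 ++ G2) (vsubst (length G1) (Const E) N) B -> typed (G1 ++ E :: G2) N B.
Proof.
  induction N; intros G1 G2 E B H; simpl in H.
  - destruct (Nat.eqb_spec n (length G1)).
    + subst. inversion H; subst. constructor.
      rewrite nth_error_app2 by lia. rewrite Nat.sub_diag; reflexivity.
    + destruct (Nat.ltb_spec n (length G1)).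
      * inversion H; subst. constructor. rewrite nth_error_app1 in * by lia. auto.
      * inversion H; subst. constructor.
        rewrite nth_error_app2 in H3 by lia. rewrite nth_error_app2 by lia.
        replace (n - length G1) with (S (pred n - length G1)) by lia. simpl. auto.
  - inversion H; subst; constructor.
  - inversion H; subst. constructor. apply (IHN (A :: G1)). exact H2.
  - inversion H; subst. econstructor; eauto.
  - inversion H; subst. constructor. rewrite map_app in *. simpl.
    apply IHN. rewrite length_map. exact H2.
  - inversion H; subst. constructor; eauto.
Qed.

Fixpoint hc (t : term) : Prop :=
  match t with
  | Const _ => True
  | App t _ => hc t
  | TApp t _ => hc t
  | _ => False
  end.

Lemma step_hc : forall t u, step t u -> hc t -> hc u.
Proof. induction 1; simpl; intros; try contradiction; auto. Qed.

Lemma steps_hc : forall t u, steps t u -> hc t -> hc u.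
Proof. induction 1; eauto using step_hc. Qed.

Lemma apps_hc : forall Ts h, hc h -> hc (apps h Ts).
Proof.
  induction Ts as [|[s|Y] Ts IH]; intros h H; simpl; auto; apply IH; simpl; auto.
Qed.

Lemma apps_snoc : forall Ts h T, apps h (Ts ++ [T]) =
  match T with inl s => App (apps h Ts) s | inr Y => TApp (apps h Ts) Y end.
Proof. intros; unfold apps; rewrite fold_left_app; reflexivity. Qed.

Lemma steps_trans : forall t u v, steps t u -> steps u v -> steps t v.
Proof. induction 1; eauto using steps_step. Qed.

Lemma steps_appl : forall t t' s, steps t t' -> steps (App t s) (App t' s).
Proof. induction 1; [constructor|econstructor; [apply st_appl; eauto|eauto]]. Qed.
Lemma steps_appr : forall t s s', steps s s' -> steps (App t s) (App t s').
Proof. induction 1; [constructor|econstructor; [apply st_appr; eauto|eauto]]. Qed.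
Lemma steps_tapp : forall t t' Y, steps t t' -> steps (TApp t Y) (TApp t' Y).
Proof. induction 1; [constructor|econstructor; [apply st_tapp; eauto|eauto]]. Qed.
Lemma steps_lam : forall t t', steps t t' -> steps (Lam t) (Lam t').
Proof. induction 1; [constructor|econstructor; [apply st_lam; eauto|eauto]]. Qed.
Lemma steps_tlam : forall t t', steps t t' -> steps (TLam t) (TLam t').
Proof. induction 1; [constructor|econstructor; [apply st_tlam; eauto|eauto]]. Qed.

Lemma decomp_app : forall E x s, steps x s -> forall t, x = App t (Const E) ->
  (exists t', steps t t' /\ s = App t' (Const E)) \/
  (exists M, steps t (Lam M) /\ steps (vsubst 0 (Const E) M) s).
Proof.
  intros E x s H; induction H; intros t0 ->.
  - left; exists t0; split; [constructor|reflexivity].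
  - inversion H; subst.
    + right; eexists; split; [apply steps_refl|eassumption].
    + match goal with Hs : step t0 ?t' |- _ => destruct (IHsteps t' eq_refl) as [[t'' [H1 H2]]|[M [H1 H2]]] end.
      * left; exists t''; split; [econstructor; eauto|auto].
      * right; exists M; split; [econstructor; eauto|auto].
    + match goal with Hs : step (Const _) _ |- _ => inversion Hs end.
Qed.

Lemma decomp_tapp : forall Y x s, steps x s -> forall t, x = TApp t Y ->
  (exists t', steps t t' /\ s = TApp t' Y) \/
  (exists M, steps t (TLam M) /\ steps (tsubst 0 Y M) s).
Proof.
  intros Y x s H; induction H; intros t0 ->.
  - left; exists t0; split; [constructor|reflexivity].
  - inversion H; subst.
    + right; eexists; split; [apply steps_refl|eassumption].
    + match goal with Hs : step t0 ?t' |- _ => destruct (IHsteps t' eq_refl) as [[t'' [H1 H2]]|[M [H1 H2]]] end.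
      * left; exists t''; split; [econstructor; eauto|auto].
      * right; exists M; split; [econstructor; eauto|auto].
Qed.

Lemma fsize_pos : forall A, 1 <= fsize A.
Proof. destruct A; simpl; lia. Qed.

Lemma star_fuel : forall n m A t, fsize A <= n -> fsize A <= m ->
  (star_n n A t <-> star_n m A t).
Proof.
  induction n; intros m A t H1 H2; [pose proof (fsize_pos A); lia|].
  destruct m; [pose proof (fsize_pos A); lia|].
  destruct A as [x|A B|A]; simpl in *; [tauto| |].
  - split; intros [Hc Hf]; split; auto; intros s Hs.
    + apply (proj1 (IHn m B (App t s) ltac:(lia) ltac:(lia))).
      apply Hf. apply (proj2 (IHn m A s ltac:(lia) ltac:(lia))). exact Hs.
    + apply (proj2 (IHn m B (App t s) ltac:(lia) ltac:(lia))).
      apply Hf. apply (proj1 (IHn m A s ltac:(lia) ltac:(lia))). exact Hs.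
  - split; intros [Hc Hf]; split; auto; intros Y.
    + apply (proj1 (IHn m (finst A Y) (TApp t Y) ltac:(rewrite fsize_finst; lia)
         ltac:(rewrite fsize_finst; lia))). apply Hf.
    + apply (proj2 (IHn m (finst A Y) (TApp t Y) ltac:(rewrite fsize_finst; lia)
         ltac:(rewrite fsize_finst; lia))). apply Hf.
Qed.

Lemma star_imp : forall A B t, star (Imp A B) t <->
  closed t /\ (forall s, star A s -> star B (App t s)).
Proof.
  intros A B t; unfold star; simpl. split; intros [Hc Hf]; split; auto; intros s Hs.
  - apply (proj1 (star_fuel (fsize A + fsize B) (fsize B) B (App t s) ltac:(lia) ltac:(lia))).
    apply Hf. apply (proj1 (star_fuel (fsize A) (fsize A + fsize B) A s ltac:(lia) ltac:(lia))). exact Hs.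
  - apply (proj1 (star_fuel (fsize B) (fsize A + fsize B) B (App t s) ltac:(lia) ltac:(lia))).
    apply Hf. apply (proj1 (star_fuel (fsize A + fsize B) (fsize A) A s ltac:(lia) ltac:(lia))). exact Hs.
Qed.

Lemma star_all : forall A t, star (All A) t <->
  closed t /\ (forall Y, star (finst A Y) (TApp t Y)).
Proof.
  intros A t; unfold star; simpl. split; intros [Hc Hf]; split; auto; intros Y.
  - apply (proj1 (star_fuel (fsize A) (fsize (finst A Y)) (finst A Y) (TApp t Y)
      ltac:(rewrite fsize_finst; lia) ltac:(rewrite fsize_finst; lia))).
    apply Hf.
  - apply (proj1 (star_fuel (fsize (finst A Y)) (fsize A) (finst A Y) (TApp t Y)
      ltac:(rewrite fsize_finst; lia) ltac:(rewrite fsize_finst; lia))).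
    apply Hf.
Qed.

Lemma normal_app_inv : forall t s, normal (App t s) ->
  normal t /\ match t with Lam _ => False | _ => True end.
Proof. intros [] s H; simpl in *; tauto. Qed.

Lemma normal_tapp_inv : forall t Y, normal (TApp t Y) ->
  normal t /\ match t with TLam _ => False | _ => True end.
Proof. intros [] Y H; simpl in *; tauto. Qed.

Definition P1 (A : form) : Prop :=
  forall (D : form) (Ts : list (term + nat)),
    Forall arg_ok Ts -> sem A (apps (Const D) Ts) -> star A (apps (Const D) Ts).
Definition P2 (A : form) : Prop := forall t : term, star A t -> sem A t.

Lemma main_n : forall n A, fsize A <= n -> P1 A /\ P2 A.
Proof.
  induction n; intros A Hn; [pose proof (fsize_pos A); lia|].
  destruct A as [x|A B|A].
  - split; intros ?; unfold star; simpl; auto.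
  - simpl in Hn.
    destruct (IHn A ltac:(lia)) as [IA1 IA2].
    destruct (IHn B ltac:(lia)) as [IB1 IB2].
    split.
    + intros D Ts HTs [Hc [u [Hu [Hnu Htu]]]].
      apply star_imp; split; auto. intros s Hs.
      destruct (IA2 s Hs) as [Hcs [s' [Hs' [Hns' Hts']]]].
      pose proof (IB1 D (Ts ++ [inl s])) as HB.
      rewrite apps_snoc in HB. apply HB.
      * apply Forall_app; split; auto.
      * split; [split; auto|].
        exists (App u s'); split; [|split].
        -- eapply steps_trans; [apply steps_appl; eauto|apply steps_appr; eauto].
        -- assert (hc u) by (eapply steps_hc; [eauto|apply apps_hc; simpl; auto]).
           destruct u; simpl in *; tauto.
        -- econstructor; eauto.
    + intros t Ht. apply star_imp in Ht. destruct Ht as [Hc Hf].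
      assert (HcA : star A (Const A)).
      { apply (IA1 A []); auto. split; [exact I|].
        exists (Const A); split; [constructor|split; [exact I|constructor]]. }
      destruct (IB2 _ (Hf _ HcA)) as [_ [s [Hs [Hns Hts]]]].
      split; auto.
      destruct (decomp_app A _ _ Hs t eq_refl) as [[t' [H1 ->]]|[M [H1 H2]]].
      * exists t'; split; auto. apply normal_app_inv in Hns. split; [tauto|].
        inversion Hts; subst. inversion H5; subst. auto.
      * destruct (anti_steps 0 A _ _ H2 M eq_refl) as [M' [HM ->]].
        exists (Lam M'); split; [eapply steps_trans; [eauto|apply steps_lam; auto]|].
        split; [simpl; eapply normal_vsubst_inv; eauto|].
        constructor. apply (typed_vsubst_inv M' [] [] A B). exact Hts.
  - simpl in Hn.
    assert (IH : forall Y, P1 (finst A Y) /\ P2 (finst A Y)).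
    { intros Y; apply IHn; rewrite fsize_finst; lia. }
    split.
    + intros D Ts HTs [Hc [u [Hu [Hnu Htu]]]].
      apply star_all; split; auto. intros Y.
      destruct (IH Y) as [I1 _].
      pose proof (I1 D (Ts ++ [inr Y])) as HB.
      rewrite apps_snoc in HB. apply HB.
      * apply Forall_app; split; auto. constructor; simpl; auto.
      * split; [exact Hc|].
        exists (TApp u Y); split; [|split].
        -- apply steps_tapp; auto.
        -- assert (hc u) by (eapply steps_hc; [eauto|apply apps_hc; simpl; auto]).
           destruct u; simpl in *; tauto.
        -- constructor; auto.
    + intros t Ht. apply star_all in Ht. destruct Ht as [Hc Hf].
      destruct (tbound_ex t) as [N1 HN1].
      destruct (fbound_ex (All A)) as [N2 HN2].
      set (N := max N1 N2).
      assert (HtN : tbound N t) by (eapply tbound_mono; eauto; lia).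
      assert (HAN : fbound (S N) A) by (eapply (fbound_mono (All A)); eauto; lia).
      destruct (IH N) as [_ I2].
      destruct (I2 _ (Hf N)) as [_ [s [Hs [Hns Hts]]]].
      split; auto.
      destruct (decomp_tapp N _ _ Hs t eq_refl) as [[t' [H1 ->]]|[M [H1 H2]]].
      * exists t'; split; auto. apply normal_tapp_inv in Hns. destruct Hns as [Hnt' Hsh].
        split; auto.
        inversion Hts; subst.
        match goal with Ht' : typed [] t' (All ?A0), E : finst ?A0 N = finst A N |- _ =>
          assert (Hneu : neutral t');
          [ eapply normal_neutral; [exact Hnt'|exact Ht'|];
            destruct t'; try exact I; [inversion Ht'|contradiction]
          | assert (HB0 : fbound N (All A0))
              by (eapply neutral_bound; eauto; eapply steps_bound; eauto);
            simpl in HB0;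
            rewrite <- (finst_inj A0 A N HB0 HAN E); exact Ht' ] end.
      * assert (HM : tbound (S N) M) by (apply (steps_bound _ _ H1 N HtN)).
        pose proof (steps_rn _ _ H2 (rho N)) as H3.
        rewrite trn_rho_tsubst in H3 by exact HM.
        exists (TLam (trn (rho N) s)); split.
        -- eapply steps_trans; [eauto|apply steps_tlam; auto].
        -- split; [simpl; apply normal_rn; auto|].
           constructor. simpl.
           pose proof (typed_rn _ _ _ Hts (rho N)) as Ht'. simpl in Ht'.
           rewrite frn_rho_finst in Ht' by exact HAN. exact Ht'.
Qed.

Theorem mainTheorem7 :
  forall A : form,
    (forall (D : form) (Ts : list (term + nat)),
        Forall arg_ok Ts ->
        sem A (apps (Const D) Ts) -> star A (apps (Const D) Ts))
    /\ (forall t : term, star A t -> sem A t).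
Proof.
  intros A. apply (main_n (fsize A) A); auto.
Qed.
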